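(* Let $n$ be a positive integer. If $\Phi(n)^{\Phi(n)}\equiv 1\pmod n$ or $\Lambda(n)^{\Lambda(n)}\equiv 1 \pmod n$, then $n$ is $G$-cyclic.
   Context: For a positive integer $n$, $\mathcal{G}_n=\{a+bi\in\mathbb{Z}[i]/n\mathbb{Z}[i] : a^2+b^2\equiv 1\pmod n\}$ (a multiplicative group), $\Phi(n)=|\mathcal{G}_n|$, and $\Lambda(n)$ is the exponent of $\mathcal{G}_n$. An integer $n\ge 1$ is $G$-cyclic if $\gcd(\Phi(n),n)=1$. *)

(* Defs.v *)
From mathcomp Require Import all_boot.
Set Implicit Arguments. Unset Strict Implicit. Unset Printing Implicit Defensive.

(* Z[i]/nZ[i] is modelled as pairs (a,b) of residues mod n (a + b i),
   with a, b : 'I_n.  Arithmetic is done on nat representatives mod n. *)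

(* multiplication in Z[i]/nZ[i]: (a+bi)(c+di) = (ac - bd) + (ad + bc) i,
   where -bd is represented by (n-1)*bd mod n *)
Definition gmul (n : nat) (x y : nat * nat) : nat * nat :=
  ((x.1 * y.1 + (n - 1) * (x.2 * y.2)) %% n, (x.1 * y.2 + x.2 * y.1) %% n).

Definition gone (n : nat) : nat * nat := (1 %% n, 0).

Definition gpow (n : nat) (x : nat * nat) (m : nat) : nat * nat :=
  iter m (gmul n x) (gone n).

Definition Gn (n : nat) : {set 'I_n * 'I_n} :=
  [set x : 'I_n * 'I_n | ((val x.1) ^ 2 + (val x.2) ^ 2 == 1 %[mod n])].

Definition Phi (n : nat) : nat := #|Gn n|.

Definition is_exponent_Gn (n L : nat) : Prop :=
  0 < L /\
  (forall x, x \in Gn n -> gpow n (val x.1, val x.2) L = gone n) /\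
  (forall m, 0 < m -> (forall x, x \in Gn n -> gpow n (val x.1, val x.2) m = gone n) -> L <= m).

Definition G_cyclic (n : nat) : bool := coprime (Phi n) n.

(* Main.v *)
Require Import Defs.
From HB Require Import structures.
From mathcomp Require Import all_boot.
From mathcomp Require Import all_algebra all_fingroup all_solvable.
From mathcomp Require Import ring.
Set Implicit Arguments. Unset Strict Implicit. Unset Printing Implicit Defensive.
Import GRing.Theory.

Section G.
Variable m : nat.
Local Notation n := m.+2.

Lemma valnat k : val (k%:R : 'I_n)%R = k %% n.
Proof. by rewrite Zp_nat. Qed.

Lemma memG (x : 'I_n * 'I_n) : (x \in Gn n) = (x.1 * x.1 + x.2 * x.2 == 1)%R.
Proof.
rewrite inE -[x.1 in RHS]natr_Zp -[x.2 in RHS]natr_Zp -natrM -natrM -natrD.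
by rewrite -val_eqE valnat /= !mulnn.
Qed.

Definition zmul (u v : 'I_n * 'I_n) : 'I_n * 'I_n :=
  (u.1*v.1 - u.2*v.2, u.1*v.2 + u.2*v.1)%R.

Definition natpair (u : 'I_n * 'I_n) := (val u.1, val u.2).

Lemma zmulE u v : natpair (zmul u v) = gmul n (natpair u) (natpair v).
Proof.
rewrite /natpair /gmul; congr pair; rewrite -valnat; apply: (congr1 val);
  rewrite /zmul [(_, _).1]/= [(_, _).2]/=.
  have h : (((n - 1)%:R : 'I_n) = -1)%R.
    apply/eqP; rewrite -subr_eq0 opprK subn1 /= natr1.
    by rewrite -val_eqE valnat modnn.
  by rewrite natrD !natrM h !natr_Zp mulN1r.
by rewrite natrD !natrM !natr_Zp.
Qed.

Definition T := {x : 'I_n * 'I_n | x \in Gn n}.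

Lemma mul_closed (x y : T) : zmul (val x) (val y) \in Gn n.
Proof.
case: x y => [[a b] hx] [[c d] hy] /=; move: hx hy; rewrite !memG /= => /eqP hx /eqP hy.
rewrite /zmul /=; apply/eqP; transitivity ((a*a+b*b)*(c*c+d*d))%R; first ring.
by rewrite hx hy mulr1.
Qed.

Definition mulT (x y : T) : T := exist (fun z => z \in Gn n) _ (mul_closed x y).

Lemma one_closed : ((1, 0) : 'I_n * 'I_n)%R \in Gn n.
Proof. by rewrite memG /= mulr0 addr0 mulr1. Qed.
Definition oneT : T := exist (fun z => z \in Gn n) _ one_closed.

Lemma inv_closed (x : T) : ((val x).1, - (val x).2)%R \in Gn n.
Proof. case: x => [[a b] hx] /=; move: hx; rewrite !memG /=. by rewrite mulrNN. Qed.
Definition invT (x : T) : T := exist (fun z => z \in Gn n) _ (inv_closed x).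

Lemma mulTA : associative mulT.
Proof.
move=> [[a b] ?] [[c d] ?] [[e f] ?]; apply: val_inj; rewrite /= /zmul /=.
congr pair; ring.
Qed.

Lemma mul1T : left_id oneT mulT.
Proof.
move=> [[a b] ?]; apply: val_inj; rewrite /= /zmul /=; congr pair; ring.
Qed.

Lemma mulVT : left_inverse oneT invT mulT.
Proof.
move=> [[a b] hx]; apply: val_inj; rewrite /= /zmul /=; move: hx; rewrite memG /= => /eqP h.
congr pair; [rewrite -h|]; ring.
Qed.

HB.instance Definition _ := Finite.copy T T.
HB.instance Definition _ := Finite_isGroup.Build T mulTA mul1T mulVT.

Lemma powE (x : T) k : natpair (val (x ^+ k)%g) = gpow n (natpair (val x)) k.
Proof.
elim: k => [|k IH]; first by rewrite expg0 /gpow /= /natpair /= modn_small.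
by rewrite expgS /gpow iterS -/(gpow _ _ _) -IH -zmulE.
Qed.

End G.

Lemma aux n p a k : prime p -> p %| n -> p %| a -> 0 < k -> a ^ k = 1 %[mod n] -> False.
Proof.
move=> pp pn pa k0 h.
have : a ^ k %% p = 1 %% p by rewrite -(modn_dvdm _ pn) h modn_dvdm.
rewrite (eqP (dvdn_exp k0 pa)) modn_small ?prime_gt1 //.
Qed.

Lemma PhiT m : #|[set: T m]| = Phi m.+2.
Proof. by rewrite cardsT card_sig. Qed.

Theorem mainTheorem13 (n : nat) (hn : 0 < n) (Lambda : nat)
  (hL : is_exponent_Gn n Lambda) :
  (Phi n ^ Phi n = 1 %[mod n] \/ Lambda ^ Lambda = 1 %[mod n]) ->
  G_cyclic n.
Proof.
case: n hn hL => [//|[|m]] _ hL H; first by rewrite /G_cyclic coprimen1.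
rewrite /G_cyclic /coprime; apply/negPn/negP => hg.
have g0 : 0 < gcdn (Phi m.+2) m.+2 by rewrite gcdn_gt0 orbT.
have g1 : 1 < gcdn (Phi m.+2) m.+2 by rewrite ltn_neqAle eq_sym hg.
set p := pdiv (gcdn (Phi m.+2) m.+2).
have pp : prime p by rewrite pdiv_prime.
have pg : p %| gcdn (Phi m.+2) m.+2 by apply: pdiv_dvd.
have pP : p %| Phi m.+2 by apply: dvdn_trans pg (dvdn_gcdl _ _).
have pn : p %| m.+2 by apply: dvdn_trans pg (dvdn_gcdr _ _).
have P0 : 0 < Phi m.+2.
  by apply/card_gt0P; exists (Ordinal (isT : 1 < m.+2), Ordinal (isT : 0 < m.+2)); rewrite inE.
case: H => H; first exact: aux pp pn pP P0 H.
case: hL => L0 [hL _]; apply: (aux pp pn _ L0 H).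
have : p %| #|[set: T m]| by rewrite PhiT.
case/(Cauchy pp) => x _ <-.
rewrite order_dvdn; apply/eqP/val_inj.
have := hL (val x) (valP x); rewrite -[gpow _ _ _](powE x Lambda) => e.
case: (val (x ^+ Lambda)%g) e => a b /=; rewrite /gone /natpair /= modn_small // => [[ea eb]].
by congr pair; apply: val_inj.
Qed.
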